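(* For every set of formulas $\Gamma$ and formula $\alpha$: $\Gamma\vdash_{LFI3}\alpha$ (derivability in the Hilbert calculus LFI3) if and only if $\Gamma\vDash_{LFI3}\alpha$ (consequence in the five-valued LFI3 matrix).
   Context: Formulas are built from a countable set of propositional variables using unary $\neg,\circ$ and binary $\land,\lor,\to$; $\alpha\leftrightarrow\beta:=(\alpha\to\beta)\land(\beta\to\alpha)$, $\sim\alpha:=\neg\alpha\land\circ\alpha$. mbC is the Hilbert calculus with the axiom schemas of a standard axiomatization of positive classical propositional logic in $\land,\lor,\to$, plus $\alpha\lor\neg\alpha$ and $\circ\alpha\to(\alpha\to(\neg\alpha\to\beta))$, with modus ponens as only rule. The Hilbert calculus LFI3 is mbC plus the schemas $\circ\alpha\lor(\alpha\land\neg\alpha)$, $\circ\circ\circ\alpha$, $\neg\neg\alpha\to\alpha$, $\alpha\to\neg\neg\alpha$, $\neg\circ\neg\alpha\leftrightarrow\neg\circ\alpha$, and: A1 $\neg(\alpha\land\beta)\leftrightarrow(\neg\alpha\lor\neg\beta)$; A2 $\neg(\alpha\lor\beta)\leftrightarrow(\neg\alpha\land\neg\beta)$; A3 $\neg(\alpha\to\beta)\leftrightarrow(\neg\beta\land(\sim\neg\alpha\lor\neg\circ\alpha))$; A4 $\neg\circ(\alpha\land\beta)\leftrightarrow(((\sim\neg\alpha\land\neg\circ\beta)\lor(\neg\circ\alpha\land\sim\neg\beta))\lor(\neg\circ\alpha\land\neg\circ\beta))$; A5 $\neg\circ(\alpha\lor\beta)\leftrightarrow(((\sim\alpha\land\neg\circ\beta)\lor(\neg\circ\alpha\land\sim\beta))\lor(\neg\circ\alpha\land\neg\circ\beta))$;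 A6 $\neg\circ(\alpha\to\beta)\leftrightarrow((\sim\neg\alpha\land\neg\circ\beta)\lor(\sim\neg\alpha\land\neg\circ\alpha\land\sim\beta)\lor(\neg\circ\alpha\land\neg\circ\beta)\lor(\sim\alpha\land\neg\circ\alpha\land\sim\beta))$. Semantics: on $\{0,1\}$ use Boolean $\land,\lor,\to,\sim$. Let $\mathbb{B}=\{x\in\{0,1\}^3: x_1\lor x_2=1,\ x_3\lor\sim(x_1\land x_2)=1\}$ (five elements). The LFI3 algebra on $\mathbb{B}$: $a\dot\land b=(a_1\land b_1,\ a_2\lor b_2,\ (\sim a_2\land b_3)\lor(a_3\land\sim b_2)\lor(a_3\land b_3))$; $a\dot\lor b=(a_1\lor b_1,\ a_2\land b_2,\ (\sim a_1\land b_3)\lor(a_3\land\sim b_1)\lor(a_3\land b_3))$; $a\dot\to b=(a_1\to b_1,\ b_2\land(\sim a_2\lor a_3),\ (\sim a_2\land b_3)\lor(\sim a_2\land a_3\land\sim b_1)\lor(a_3\land b_3)\lor(\sim a_1\land a_3\land\sim b_1))$; $\dot\neg a=(a_2,a_1,a_3)$; $\dot\circ a=(\sim(a_1\land a_2),a_3,a_3\land\sim(a_1\land a_2))$. Designated set $D=\{x:x_1=1\}$. $\Gamma\vDash_{LFI3}\alpha$ iff every homomorphism $h$ from formulas to this algebra with $h[\Gamma]\subseteq D$ has $h(\alpha)\in D$. *)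

(* Defs.v *)
From Stdlib Require Import Bool.

Inductive formula : Type :=
| Var : nat -> formula
| Neg : formula -> formula
| Circ : formula -> formula
| And : formula -> formula -> formula
| Or : formula -> formula -> formula
| Imp : formula -> formula -> formula.

Definition Iff (a b : formula) : formula := And (Imp a b) (Imp b a).
Definition Sneg (a : formula) : formula := And (Neg a) (Circ a).

Inductive LFI3_axiom : formula -> Prop :=
| Ax1 a b : LFI3_axiom (Imp a (Imp b a))
| Ax2 a b c : LFI3_axiom (Imp (Imp a b) (Imp (Imp a (Imp b c)) (Imp a c)))
| Ax3 a b : LFI3_axiom (Imp a (Imp b (And a b)))
| Ax4 a b : LFI3_axiom (Imp (And a b) a)
| Ax5 a b : LFI3_axiom (Imp (And a b) b)
| Ax6 a b : LFI3_axiom (Imp a (Or a b))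
| Ax7 a b : LFI3_axiom (Imp b (Or a b))
| Ax8 a b c : LFI3_axiom (Imp (Imp a c) (Imp (Imp b c) (Imp (Or a b) c)))
| Ax9 a b : LFI3_axiom (Or a (Imp a b))
| Ax10 a : LFI3_axiom (Or a (Neg a))
| Bc1 a b : LFI3_axiom (Imp (Circ a) (Imp a (Imp (Neg a) b)))
| Ci a : LFI3_axiom (Or (Circ a) (And a (Neg a)))
| Ccc a : LFI3_axiom (Circ (Circ (Circ a)))
| Cf a : LFI3_axiom (Imp (Neg (Neg a)) a)
| Ce a : LFI3_axiom (Imp a (Neg (Neg a)))
| NegCircNeg a : LFI3_axiom (Iff (Neg (Circ (Neg a))) (Neg (Circ a)))
| A1 a b : LFI3_axiom (Iff (Neg (And a b)) (Or (Neg a) (Neg b)))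
| A2 a b : LFI3_axiom (Iff (Neg (Or a b)) (And (Neg a) (Neg b)))
| A3 a b : LFI3_axiom
    (Iff (Neg (Imp a b)) (And (Neg b) (Or (Sneg (Neg a)) (Neg (Circ a)))))
| A4 a b : LFI3_axiom
    (Iff (Neg (Circ (And a b)))
         (Or (Or (And (Sneg (Neg a)) (Neg (Circ b)))
                 (And (Neg (Circ a)) (Sneg (Neg b))))
             (And (Neg (Circ a)) (Neg (Circ b)))))
| A5 a b : LFI3_axiom
    (Iff (Neg (Circ (Or a b)))
         (Or (Or (And (Sneg a) (Neg (Circ b)))
                 (And (Neg (Circ a)) (Sneg b)))
             (And (Neg (Circ a)) (Neg (Circ b)))))
| A6 a b : LFI3_axiom
    (Iff (Neg (Circ (Imp a b)))
         (Or (Or (Or (And (Sneg (Neg a)) (Neg (Circ b)))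
                     (And (And (Sneg (Neg a)) (Neg (Circ a))) (Sneg b)))
                 (And (Neg (Circ a)) (Neg (Circ b))))
             (And (And (Sneg a) (Neg (Circ a))) (Sneg b)))).

Inductive derivable (Gamma : formula -> Prop) : formula -> Prop :=
| d_hyp a : Gamma a -> derivable Gamma a
| d_ax a : LFI3_axiom a -> derivable Gamma a
| d_mp a b : derivable Gamma a -> derivable Gamma (Imp a b) -> derivable Gamma b.

Definition triple := (bool * bool * bool)%type.
Definition t1 (x : triple) : bool := let '(a, _, _) := x in a.
Definition t2 (x : triple) : bool := let '(_, b, _) := x in b.
Definition t3 (x : triple) : bool := let '(_, _, c) := x in c.

(* membership in the five-element universe B *)
Definition inB (x : triple) : Prop :=
  (t1 x || t2 x) = true /\ (t3 x || negb (t1 x && t2 x)) = true.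

Definition mk (a b c : bool) : triple := (a, b, c).

Definition sand (a b : triple) : triple :=
  mk (t1 a && t1 b) (t2 a || t2 b)
     ((negb (t2 a) && t3 b) || (t3 a && negb (t2 b)) || (t3 a && t3 b)).
Definition sor (a b : triple) : triple :=
  mk (t1 a || t1 b) (t2 a && t2 b)
     ((negb (t1 a) && t3 b) || (t3 a && negb (t1 b)) || (t3 a && t3 b)).
Definition simp (a b : triple) : triple :=
  mk (implb (t1 a) (t1 b)) (t2 b && (negb (t2 a) || t3 a))
     ((negb (t2 a) && t3 b) || (negb (t2 a) && t3 a && negb (t1 b))
      || (t3 a && t3 b) || (negb (t1 a) && t3 a && negb (t1 b))).
Definition sneg (a : triple) : triple := mk (t2 a) (t1 a) (t3 a).
Definition scirc (a : triple) : triple :=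
  mk (negb (t1 a && t2 a)) (t3 a) (t3 a && negb (t1 a && t2 a)).

Fixpoint eval (v : nat -> triple) (f : formula) : triple :=
  match f with
  | Var n => v n
  | Neg a => sneg (eval v a)
  | Circ a => scirc (eval v a)
  | And a b => sand (eval v a) (eval v b)
  | Or a b => sor (eval v a) (eval v b)
  | Imp a b => simp (eval v a) (eval v b)
  end.

Definition designated (x : triple) : Prop := t1 x = true.

Definition valuation (v : nat -> triple) : Prop := forall n, inB (v n).

Definition models (Gamma : formula -> Prop) (a : formula) : Prop :=
  forall v, valuation v ->
    (forall g, Gamma g -> designated (eval v g)) -> designated (eval v a).

(* Main.v *)
Require Import Defs.
From Stdlib Require Import Bool Arith Lia Classical ClassicalEpsilon Cantor.

Ltac crush :=
  repeat match goal with x : triple |- _ => destruct x as [[? ?] ?] end;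
  repeat match goal with b : bool |- _ => destruct b end;
  unfold inB, designated in *; simpl in *;
  intuition (try discriminate; auto).

Lemma eval_inB v : valuation v -> forall f, inB (eval v f).
Proof.
  intros Hv f; induction f; simpl; [apply Hv | ..];
  repeat match goal with H : inB ?x |- _ => revert H; generalize x end;
  intros; crush.
Qed.

Lemma ax_sound v : valuation v -> forall a, LFI3_axiom a -> designated (eval v a).
Proof.
  intros Hv a Ha; destruct Ha; unfold Iff, Sneg; simpl;
  repeat match goal with |- context [eval v ?x] =>
    let H := fresh in pose proof (eval_inB v Hv x) as H; revert H; generalize (eval v x) end;
  intros; crush.
Qed.

Lemma soundness G a : derivable G a -> models G a.
Proof.
  intros H v Hv HG; induction H.
  - auto.
  - apply ax_sound; auto.
  - unfold designated in *; simpl in IHderivable2.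
    rewrite IHderivable1 in IHderivable2; exact IHderivable2.
Qed.

Fixpoint encode (f : formula) : nat :=
  match f with
  | Var n => to_nat (0, n)
  | Neg a => to_nat (1, encode a)
  | Circ a => to_nat (2, encode a)
  | And a b => to_nat (3, to_nat (encode a, encode b))
  | Or a b => to_nat (4, to_nat (encode a, encode b))
  | Imp a b => to_nat (5, to_nat (encode a, encode b))
  end.

Lemma to_nat_inj p q : to_nat p = to_nat q -> p = q.
Proof.
  intros H. rewrite <- (cancel_of_to p), <- (cancel_of_to q), H. reflexivity.
Qed.

Lemma encode_inj f g : encode f = encode g -> f = g.
Proof.
  revert g; induction f; intros g H; destruct g; cbn [encode] in H;
  apply to_nat_inj in H; try discriminate;
  pose proof (f_equal snd H) as H'; cbn [snd] in H'; clear H;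
  try (apply to_nat_inj in H';
       pose proof (f_equal fst H') as H1; pose proof (f_equal snd H') as H2;
       cbn [fst snd] in H1, H2);
  f_equal; auto.
Qed.

Definition union (S : formula -> Prop) (x : formula) : formula -> Prop :=
  fun y => S y \/ y = x.

Lemma derivable_mono (S T : formula -> Prop) a :
  (forall x, S x -> T x) -> derivable S a -> derivable T a.
Proof.
  intros HST H; induction H.
  - apply d_hyp; auto.
  - apply d_ax; auto.
  - eapply d_mp; [exact IHderivable1 | exact IHderivable2].
Qed.

Lemma imp_refl S x : derivable S (Imp x x).
Proof.
  eapply d_mp. 2: eapply d_mp. 3: apply d_ax, (Ax2 x (Imp x x) x).
  - apply d_ax, Ax1.
  - apply d_ax, Ax1.
Qed.

Lemma deduction S x y : derivable (union S x) y -> derivable S (Imp x y).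
Proof.
  intros H; induction H.
  - destruct H as [H|H].
    + eapply d_mp; [apply d_hyp, H | apply d_ax, Ax1].
    + subst; apply imp_refl.
  - eapply d_mp; [apply d_ax, H | apply d_ax, Ax1].
  - eapply d_mp; [exact IHderivable2|].
    eapply d_mp; [exact IHderivable1|]. apply d_ax, Ax2.
Qed.

Fixpoint chain (G : formula -> Prop) (al : formula) (n : nat) : formula -> Prop :=
  match n with
  | 0 => G
  | S m => fun y => chain G al m y \/
                    (encode y = m /\ ~ derivable (union (chain G al m) y) al)
  end.

Definition Delta G al y := exists n, chain G al n y.

Lemma chain_mono G al m n y : m <= n -> chain G al m y -> chain G al n y.
Proof.
  intros Hle; induction Hle; simpl; auto.
Qed.

Lemma compact G al a : derivable (Delta G al) a -> exists n, derivable (chain G al n) a.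
Proof.
  intros H; induction H.
  - destruct H as [n Hn]. exists n; apply d_hyp; auto.
  - exists 0; apply d_ax; auto.
  - destruct IHderivable1 as [n1 H1], IHderivable2 as [n2 H2].
    exists (max n1 n2). eapply d_mp.
    + eapply derivable_mono; [|exact H1]. intros; eapply chain_mono; [|eauto]; lia.
    + eapply derivable_mono; [|exact H2]. intros; eapply chain_mono; [|eauto]; lia.
Qed.

Lemma chain_cons G al : ~ derivable G al -> forall n, ~ derivable (chain G al n) al.
Proof.
  intros H0 n; induction n; [exact H0|].
  intros Hd.
  destruct (classic (exists f, encode f = n /\ ~ derivable (union (chain G al n) f) al))
    as [[f [Hf1 Hf2]] | Hno].
  - apply Hf2. eapply derivable_mono; [|exact Hd].
    intros y [Hy | [Hy1 Hy2]]; [left; auto|].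
    right; apply encode_inj; congruence.
  - apply IHn. eapply derivable_mono; [|exact Hd].
    intros y [Hy | [Hy1 Hy2]]; auto.
    exfalso; apply Hno; eauto.
Qed.

Definition good (T : formula -> Prop) (al : formula) : Prop :=
  (forall f, derivable T f -> T f) /\ ~ T al /\
  (forall f, ~ T f -> derivable (union T f) al).

Lemma Delta_good G al : ~ derivable G al -> good (Delta G al) al.
Proof.
  intros H0.
  assert (Hc : ~ derivable (Delta G al) al).
  { intros Hd. destruct (compact _ _ _ Hd) as [n Hn]. eapply chain_cons; eauto. }
  assert (Hm : forall f, ~ Delta G al f -> derivable (union (Delta G al) f) al).
  { intros f Hf. apply NNPP; intros Hn. apply Hf. exists (S (encode f)). simpl.
    right; split; auto. intros Hd; apply Hn.
    eapply derivable_mono; [|exact Hd]. intros y [Hy|Hy]; [left; exists (encode f); auto | right; auto]. }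
  split; [|split]; auto.
  - intros f Hf. apply NNPP; intros Hn. apply Hc.
    eapply d_mp; [exact Hf|]. apply deduction, Hm, Hn.
  - intros Ha; apply Hc, d_hyp, Ha.
Qed.


Lemma T_der {T al} (HT : good T al) f : derivable T f -> T f.
Proof. destruct HT as [H _]; auto. Qed.

Lemma T_ax {T al} (HT : good T al) f : LFI3_axiom f -> T f.
Proof. intros; apply (T_der HT), d_ax; auto. Qed.

Lemma T_mp {T al} (HT : good T al) x y : T x -> T (Imp x y) -> T y.
Proof. intros H1 H2; apply (T_der HT); apply d_mp with x; apply d_hyp; assumption. Qed.

Lemma T_and {T al} (HT : good T al) x y : T (And x y) <-> T x /\ T y.
Proof.
  split.
  - intros H; split; eapply (T_mp HT); eauto; apply (T_ax HT); constructor.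
  - intros [H1 H2]. eapply (T_mp HT); [exact H2|]. eapply (T_mp HT); [exact H1|].
    apply (T_ax HT); constructor.
Qed.

Lemma T_or {T al} (HT : good T al) x y : T (Or x y) <-> T x \/ T y.
Proof.
  split.
  - intros H. apply NNPP; intros Hn.
    destruct HT as [Hd [Hal Hm]].
    apply Hal, Hd. eapply d_mp; [apply d_hyp, H|].
    apply d_mp with (Imp y al); [apply deduction, Hm; tauto|].
    apply d_mp with (Imp x al); [apply deduction, Hm; tauto|].
    apply d_ax, Ax8.
  - intros [H|H]; eapply (T_mp HT); [exact H| |exact H|]; apply (T_ax HT); constructor.
Qed.

Lemma T_imp {T al} (HT : good T al) x y : T (Imp x y) <-> (T x -> T y).
Proof.
  split.
  - intros; eapply (T_mp HT); eauto.
  - intros H. destruct (proj1 (T_or HT x (Imp x y)) (T_ax HT _ (Ax9 x y))) as [H1|H1]; auto.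
    eapply (T_mp HT); [apply H, H1|]. apply (T_ax HT); constructor.
Qed.

Lemma T_excl {T al} (HT : good T al) x : T x \/ T (Neg x).
Proof. apply (T_or HT), (T_ax HT); constructor. Qed.

Lemma T_bc {T al} (HT : good T al) x : T (Circ x) -> T x -> T (Neg x) -> False.
Proof.
  intros H1 H2 H3. destruct HT as [Hd [Hal Hm]] eqn:E. apply Hal.
  eapply (T_mp HT); [exact H3|]. eapply (T_mp HT); [exact H2|].
  eapply (T_mp HT); [exact H1|]. apply (T_ax HT); constructor.
Qed.

Lemma T_circ {T al} (HT : good T al) x : T (Circ x) <-> ~ (T x /\ T (Neg x)).
Proof.
  split.
  - intros H [H1 H2]; eapply (T_bc HT); eauto.
  - intros H. destruct (proj1 (T_or HT _ _) (T_ax HT _ (Ci x))) as [H1|H1]; auto.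
    exfalso; apply H, (T_and HT), H1.
Qed.

Lemma T_iff {T al} (HT : good T al) x y : LFI3_axiom (Iff x y) -> (T x <-> T y).
Proof.
  intros H. apply (T_ax HT) in H. unfold Iff in H. apply (T_and HT) in H.
  destruct H as [H1 H2]. split; intros; eapply (T_mp HT); eauto.
Qed.

Lemma T_negneg {T al} (HT : good T al) x : T (Neg (Neg x)) <-> T x.
Proof.
  split; intros; eapply (T_mp HT); eauto; apply (T_ax HT); constructor.
Qed.

Lemma T_negcc {T al} (HT : good T al) x :
  T (Neg (Circ (Circ x))) <-> T (Neg (Circ x)) /\ ~ (T x /\ T (Neg x)).
Proof.
  split.
  - intros H.
    assert (Hn : ~ T (Circ (Circ x))).
    { intros H'. eapply (T_bc HT); [apply (T_ax HT), Ccc | exact H' | exact H]. }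
    rewrite (T_circ HT) in Hn. apply NNPP in Hn. destruct Hn as [H1 H2].
    split; auto. apply (T_circ HT); auto.
  - intros [H1 H2]. apply (T_circ HT) in H2.
    destruct (T_excl HT (Circ (Circ x))) as [H3|H3]; auto.
    exfalso. apply (T_circ HT) in H3. tauto.
Qed.

Definition bP (P : Prop) : bool := if excluded_middle_informative P then true else false.

Lemma bP_true P : bP P = true <-> P.
Proof. unfold bP; destruct (excluded_middle_informative P); split; intros; auto; try discriminate; contradiction. Qed.

Lemma bP_iff P Q : (P <-> Q) -> bP P = bP Q.
Proof.
  unfold bP; intros H; destruct (excluded_middle_informative P), (excluded_middle_informative Q); tauto.
Qed.

Lemma bP_and P Q : bP (P /\ Q) = bP P && bP Q.
Proof.
  unfold bP; destruct (excluded_middle_informative (P /\ Q)), (excluded_middle_informative P), (excluded_middle_informative Q); simpl; tauto.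
Qed.

Lemma bP_or P Q : bP (P \/ Q) = bP P || bP Q.
Proof.
  unfold bP; destruct (excluded_middle_informative (P \/ Q)), (excluded_middle_informative P), (excluded_middle_informative Q); simpl; tauto.
Qed.

Lemma bP_imp P Q : bP (P -> Q) = implb (bP P) (bP Q).
Proof.
  unfold bP; destruct (excluded_middle_informative (P -> Q)), (excluded_middle_informative P), (excluded_middle_informative Q); simpl; tauto.
Qed.

Lemma bP_not P : bP (~ P) = negb (bP P).
Proof.
  unfold bP; destruct (excluded_middle_informative (~P)), (excluded_middle_informative P); simpl; tauto.
Qed.

Definition bD (T : formula -> Prop) (f : formula) : bool := bP (T f).

Lemma bD_and {T al} (HT : good T al) x y : bD T (And x y) = bD T x && bD T y.
Proof. unfold bD; rewrite <- bP_and; apply bP_iff, (T_and HT). Qed.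
Lemma bD_or {T al} (HT : good T al) x y : bD T (Or x y) = bD T x || bD T y.
Proof. unfold bD; rewrite <- bP_or; apply bP_iff, (T_or HT). Qed.
Lemma bD_imp {T al} (HT : good T al) x y : bD T (Imp x y) = implb (bD T x) (bD T y).
Proof. unfold bD; rewrite <- bP_imp; apply bP_iff, (T_imp HT). Qed.
Lemma bD_negneg {T al} (HT : good T al) x : bD T (Neg (Neg x)) = bD T x.
Proof. unfold bD; apply bP_iff, (T_negneg HT). Qed.
Lemma bD_circ {T al} (HT : good T al) x : bD T (Circ x) = negb (bD T x && bD T (Neg x)).
Proof. unfold bD; rewrite <- bP_and, <- bP_not; apply bP_iff, (T_circ HT). Qed.
Lemma bD_negcc {T al} (HT : good T al) x :
  bD T (Neg (Circ (Circ x))) = bD T (Neg (Circ x)) && negb (bD T x && bD T (Neg x)).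
Proof. unfold bD; rewrite <- bP_and, <- bP_not, <- bP_and; apply bP_iff, (T_negcc HT). Qed.
Lemma bD_iffax {T al} (HT : good T al) x y : LFI3_axiom (Iff x y) -> bD T x = bD T y.
Proof. intros; unfold bD; apply bP_iff, (T_iff HT); auto. Qed.
Lemma bD_excl {T al} (HT : good T al) x : bD T x || bD T (Neg x) = true.
Proof. unfold bD; rewrite <- bP_or; apply bP_true, (T_excl HT). Qed.
Lemma bD_bneg {T al} (HT : good T al) x :
  bD T (Neg (Circ x)) || negb (bD T x && bD T (Neg x)) = true.
Proof.
  unfold bD; rewrite <- bP_and, <- bP_not, <- bP_or; apply bP_true.
  destruct (T_excl HT (Circ x)) as [H|H]; auto.
  right. apply (T_circ HT); auto.
Qed.

Definition h (T : formula -> Prop) (f : formula) : triple :=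
  mk (bD T f) (bD T (Neg f)) (bD T (Neg (Circ f))).

Ltac norm HT :=
  repeat first [ rewrite (bD_and HT) | rewrite (bD_or HT) | rewrite (bD_imp HT)
               | rewrite (bD_negneg HT) | rewrite (bD_circ HT) ].

Ltac finish HT T a :=
  let H1 := fresh in let H2 := fresh in
  pose proof (bD_excl HT a) as H1; pose proof (bD_bneg HT a) as H2;
  revert H1 H2;
  generalize (bD T (Neg (Circ a)));
  generalize (bD T (Neg a));
  generalize (bD T a).

Lemma truth {T al} (HT : good T al) f : eval (fun n => h T (Var n)) f = h T f.
Proof.
  induction f; simpl; [reflexivity | ..];
  try rewrite IHf; try rewrite IHf1; try rewrite IHf2;
  unfold h, sneg, scirc, sand, sor, simp, mk, t1, t2, t3.
  - rewrite (bD_negneg HT), (bD_iffax HT _ _ (NegCircNeg f)). reflexivity.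
  - rewrite (bD_negcc HT), (bD_circ HT). reflexivity.
  - rewrite (bD_iffax HT _ _ (A1 f1 f2)), (bD_iffax HT _ _ (A4 f1 f2)).
    unfold Sneg; norm HT. finish HT T f1; finish HT T f2.
    intros; repeat match goal with b : bool |- _ => destruct b end; simpl in *;
    try discriminate; reflexivity.
  - rewrite (bD_iffax HT _ _ (A2 f1 f2)), (bD_iffax HT _ _ (A5 f1 f2)).
    unfold Sneg; norm HT. finish HT T f1; finish HT T f2.
    intros; repeat match goal with b : bool |- _ => destruct b end; simpl in *;
    try discriminate; reflexivity.
  - rewrite (bD_iffax HT _ _ (A3 f1 f2)), (bD_iffax HT _ _ (A6 f1 f2)).
    unfold Sneg; norm HT. finish HT T f1; finish HT T f2.
    intros; repeat match goal with b : bool |- _ => destruct b end; simpl in *;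
    try discriminate; reflexivity.
Qed.

Lemma completeness G a : models G a -> derivable G a.
Proof.
  intros Hm. apply NNPP; intros Hn.
  pose proof (Delta_good G a Hn) as HT.
  set (T := Delta G a) in HT.
  assert (Hv : valuation (fun n => h T (Var n))).
  { intros n. unfold inB, h, mk, t1, t2, t3. split.
    - apply (bD_excl HT).
    - apply (bD_bneg HT). }
  specialize (Hm _ Hv).
  assert (Hg : forall g, G g -> designated (eval (fun n => h T (Var n)) g)).
  { intros g Hg. unfold designated. rewrite (truth HT). unfold h, mk, t1, bD.
    apply bP_true. exists 0. exact Hg. }
  specialize (Hm Hg). unfold designated in Hm. rewrite (truth HT) in Hm.
  unfold h, mk, t1, bD in Hm. apply (proj1 (bP_true _)) in Hm.
  destruct HT as [_ [Hal _]]. exact (Hal Hm).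
Qed.

Theorem theorem16 (Gamma : formula -> Prop) (a : formula) :
  derivable Gamma a <-> models Gamma a.
Proof.
  split; [apply soundness | apply completeness].
Qed.
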